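(* Let $\mu$ be a probability distribution supported in the unit square $[0,1]^2$, let $\mu_n$ be an empirical distribution of $\mu$ on $n$ samples, let $\alpha\ge 0$, and let $\mathcal{G}$ be a grid partitioning $[0,1]^2$ into axis-aligned square cells of side length $n^{-\alpha}$. Then with high probability $\mathrm{Exc}_\mu(\mathcal{G})=\tilde O(n^{\alpha-1/2})$.
   Context: For a cell $\Box$ of $\mathcal{G}$, $\mu(\Box)$ and $\mu_n(\Box)$ denote the mass of $\mu$ and $\mu_n$ in $\Box$. The excess of a cell is $\mathrm{Exc}_\mu(\Box)=\max\{0,\mu(\Box)-\mu_n(\Box)\}$ and the excess of the grid is $\mathrm{Exc}_\mu(\mathcal{G})=\sum_{\Box\in\mathcal{G}}\mathrm{Exc}_\mu(\Box)$. An empirical distribution $\mu_n$ is $\frac1n\sum_{i=1}^n\delta_{x_i}$ with $x_1,\dots,x_n$ i.i.d. from $\mu$. $\tilde O(\cdot)$ hides polylogarithmic factors in $n$; ''with high probability'' means with probability at least $1-n^{-c}$ for some constant $c>0$. *)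

(* Defs.v *)
From HB Require Import structures.
From mathcomp Require Import all_boot all_order all_algebra.
From mathcomp Require Import all_classical all_reals all_analysis.
Set Implicit Arguments. Unset Strict Implicit. Unset Printing Implicit Defensive.
Import Order.TTheory GRing.Theory Num.Theory.
Import numFieldNormedType.Exports.
Local Open Scope classical_set_scope.
Local Open Scope ring_scope.

Section Grid.
Variable R : realType.

Definition unit_square : set (R * R) :=
  [set p | (0 <= p.1 <= 1) /\ (0 <= p.2 <= 1)].

Definition grid_side (n : nat) (alpha : R) : R := (n%:R) `^ (- alpha).

Definition grid_count (n : nat) (alpha : R) : nat :=
  `|Num.ceil ((grid_side n alpha)^-1)|%N.

(* index of the column (row) containing coordinate x in [0,1]; the last
   column is closed on the right (and possibly truncated by the boundary) *)
Definition grid_idx (n : nat) (alpha : R) (x : R) : nat :=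
  minn `|Num.floor (x / grid_side n alpha)|%N (grid_count n alpha).-1.

Definition grid_cell (n : nat) (alpha : R) (i j : nat) : set (R * R) :=
  [set p | unit_square p /\ grid_idx n alpha p.1 = i /\ grid_idx n alpha p.2 = j].

Definition empirical_mass (n : nat) (xs : 'I_n -> R * R) (C : set (R * R)) : R :=
  (n%:R)^-1 * \sum_(i < n) \1_C (xs i).

Definition grid_excess (mu : set (R * R) -> \bar R) (n : nat) (alpha : R)
    (xs : 'I_n -> R * R) : R :=
  \sum_(i < grid_count n alpha) \sum_(j < grid_count n alpha)
    Num.max 0 (fine (mu (grid_cell n alpha i j)) -
               empirical_mass xs (grid_cell n alpha i j)).
End Grid.

Definition iid_sample (R : realType) (d : measure_display) (Omega : measurableType d)
    (P : probability Omega R) (mu : probability (R * R)%type R) (n : nat)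
    (X : 'I_n -> Omega -> R * R) : Prop :=
  (forall i, measurable_fun setT (X i)) /\
  (forall i (B : set (R * R)), measurable B -> P (X i @^-1` B) = mu B) /\
  (forall B : 'I_n -> set (R * R), (forall i, measurable (B i)) ->
     P (\bigcap_(i in [set: 'I_n]) (X i @^-1` B i)) =
     (\prod_(i < n) P (X i @^-1` B i))%E).

(* Main.v *)
Require Import Defs.
From HB Require Import structures.
From mathcomp Require Import all_boot all_order all_algebra.
From mathcomp Require Import all_classical all_reals all_analysis.
From mathcomp Require Import ring lra zify.
Import Order.TTheory GRing.Theory Num.Theory.
Import numFieldNormedType.Exports.
Local Open Scope classical_set_scope.
Local Open Scope ring_scope.

Section Chernoff.
Variable R : realType.

Lemma expRN_le (l : R) : 0 <= l -> expR (- l) <= 1 - l + l ^+ 2.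
Proof.
move=> l0.
have hE : (1 + l / 2) ^+ 2 <= expR l.
  have -> : expR l = expR (l / 2) ^+ 2.
    by rewrite -expRM_natl; congr expR; rewrite mulr_natl mulr2n; field.
  apply: lerXn2r; rewrite ?nnegrE; try lra.
    by apply: ltW; apply: expR_gt0.
  by apply: expR_ge1Dx.
have Epos := expR_gt0 l.
rewrite expRN -(ler_pM2r Epos) mulVf ?gt_eqF //.
have Q0 : 0 < 1 - l + l ^+ 2 by nra.
nra.
Qed.

Definition cntR n (f : {ffun 'I_n -> bool}) : R := \sum_(i < n) (f i)%:R.
Arguments cntR {n}.

Lemma prod_const_ord n (x : R) : \prod_(i < n) x = x ^+ n.
Proof. by elim: n => [|n IH]; rewrite ?big_ord0 ?expr0 // big_ord_recr IH exprSr. Qed.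

Lemma binom_chernoff n (p l a : R) (Q : pred {ffun 'I_n -> bool}) :
  0 <= p <= 1 -> 0 <= l -> (forall f, Q f -> cntR f <= a) ->
  \sum_(f | Q f) \prod_(i < n) (if f i then p else 1 - p)
    <= expR (l * a - n%:R * p * l + n%:R * p * l ^+ 2).
Proof.
move=> /andP[p0 p1] l0 HQ.
set w := fun f : {ffun 'I_n -> bool} => \prod_(i < n) (if f i then p else 1 - p).
have w0 f : 0 <= w f.
  by apply: prodr_ge0 => i _; case: (f i); lra.
apply: (@le_trans _ _ (\sum_(f | Q f) w f * expR (l * (a - cntR f)))).
  apply: ler_sum => f Qf.
  have : 1 <= expR (l * (a - cntR f)).
    have h := HQ f Qf.
    have h' : 0 <= l * (a - cntR f) by apply: mulr_ge0; lra.
    apply: le_trans (expR_ge1Dx _); lra.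
  by move=> h; have := ler_wpM2l (w0 f) h; rewrite mulr1.
apply: (@le_trans _ _ (\sum_f w f * expR (l * (a - cntR f)))).
  rewrite [X in _ <= X](bigID Q) /= lerDl.
  by apply: sumr_ge0 => f _; apply: mulr_ge0 => //; apply: ltW; apply: expR_gt0.
have step : \sum_f w f * expR (l * (a - cntR f)) =
    expR (l * a) * (p * expR (- l) + (1 - p)) ^+ n.
  transitivity (expR (l * a) *
      \sum_(f : {ffun 'I_n -> bool}) \prod_(i < n) (if f i then p * expR (- l) else 1 - p)).
    rewrite mulr_sumr; apply: eq_bigr => f _.
    rewrite mulrBr expRD mulrC -mulrA; congr (_ * _).
    rewrite /cntR mulr_sumr -sumrN expR_sum /w -big_split /=.
    apply: eq_bigr => i _; case: (f i) => /=.
      by rewrite mulr1 mulrC.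
    by rewrite mulr0 oppr0 expR0 mul1r.
  congr (_ * _).
  rewrite -prod_const_ord.
  rewrite [RHS](eq_bigr (fun i : 'I_n => \sum_(b : bool) (if b then p * expR (- l) else 1 - p))); last first.
    by move=> i _; rewrite big_bool.
  by rewrite bigA_distr_bigA /=.
rewrite step.
have base0 : 0 <= p * expR (- l) + (1 - p).
  have := expR_gt0 (- l); nra.
have hb : p * expR (- l) + (1 - p) <= expR (- (p * (1 - expR (- l)))).
  apply: le_trans (expR_ge1Dx _); lra.
apply: (@le_trans _ _ (expR (l * a) * expR (- (p * (1 - expR (- l)))) ^+ n)).
  apply: ler_wpM2l; first by apply: ltW; apply: expR_gt0.
  by apply: lerXn2r; rewrite ?inE //; apply: ltW; apply: expR_gt0.
rewrite -expRM_natl -expRD ler_expR.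
have := @expRN_le l l0.
have n0 : 0 <= n%:R :> R by apply: ler0n.
have np0 : 0 <= n%:R * p :> R by apply: mulr_ge0.
nra.
Qed.
End Chernoff.

Section Meas.
Variable R : realType.

Lemma floor_facts (s x : R) (i : nat) : 0 < s -> 0 <= x ->
  ((i <= `|Num.floor (x / s)|%N)%N = (i%:R * s <= x)) /\
  ((`|Num.floor (x / s)|%N < i)%N = (x < i%:R * s)).
Proof.
move=> s0 x0.
have z0 : (0 <= Num.floor (x / s))%R by rewrite floor_ge0 divr_ge0 // ltW.
have hz : ((`|Num.floor (x / s)|%N)%:Z = Num.floor (x / s)) by rewrite gez0_abs.
split.
  by rewrite -lez_nat hz floor_ge_int -ler_pdivlMr // -natz.
by rewrite -ltz_nat hz floor_lt_int -ltr_pdivrMr // -natz.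
Qed.

Lemma idx_set_meas (s : R) (M i : nat) : 0 < s ->
  measurable [set x : R | (0 <= x <= 1) /\ minn `|Num.floor (x / s)|%N M = i].
Proof.
move=> s0.
have -> : [set x : R | (0 <= x <= 1) /\ minn `|Num.floor (x / s)|%N M = i] =
  [set` `[0, 1]%R] `&` ([set` `[i%:R * s, +oo[%R] `&`
     (if (i < M)%N then [set` `]-oo, (i.+1)%:R * s[%R] else if i == M then setT else set0)).
  apply/seteqP; split => x /=.
    move=> [/andP[x0 x1] hm]; rewrite !in_itv /= x0 x1; split => //.
    have [h1 h2] := @floor_facts s x i s0 x0.
    have [h3 h4] := @floor_facts s x i.+1 s0 x0.
    split.
      rewrite /= andbT -h1; lia.
    case: ifP => iM; first by rewrite /= in_itv /= -h4; lia.
    case: ifP => // /negbT iM'; lia.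
  rewrite !in_itv /= andbT; move=> [/andP[x0 x1] [hi hr]]; split; first by rewrite x0.
  have [h1 h2] := @floor_facts s x i s0 x0.
  have [h3 h4] := @floor_facts s x i.+1 s0 x0.
  rewrite -h1 in hi.
  move: hr; case: ifP => iM.
    by rewrite /= in_itv /= -h4; lia.
  case: ifP => // /eqP -> _; lia.
apply: measurableI; first exact: measurable_itv.
apply: measurableI; first exact: measurable_itv.
case: ifP => _; first exact: measurable_itv.
by case: ifP.
Qed.

Lemma cell_eq (n : nat) (alpha : R) (i j : nat) :
  grid_cell n alpha i j =
  [set x : R | (0 <= x <= 1) /\ grid_idx n alpha x = i] `*`
  [set x : R | (0 <= x <= 1) /\ grid_idx n alpha x = j].
Proof.
apply/seteqP; split => -[x y] /=; rewrite /grid_cell /unit_square /=; tauto.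
Qed.

Lemma cell_meas (n : nat) (alpha : R) (i j : nat) : (0 < n)%N ->
  measurable (grid_cell n alpha i j).
Proof.
move=> n0.
have s0 : 0 < grid_side n alpha by rewrite /grid_side powR_gt0 // ltr0n.
rewrite cell_eq; apply: measurableX; exact: idx_set_meas.
Qed.
End Meas.

Section Prob.
Variables (R : realType) (d : measure_display) (Omega : measurableType d)
  (P : probability Omega R).

Lemma P_bigU (I : Type) (r : seq I) (Pp : pred I) (F : I -> set Omega) :
  (forall i, measurable (F i)) ->
  (P (\big[setU/set0]_(i <- r | Pp i) F i) <= \sum_(i <- r | Pp i) P (F i))%E.
Proof.
move=> mF; elim: r => [|a r IH]; first by rewrite !big_nil measure0.
rewrite !big_cons; case: ifP => // _.
apply: le_trans (measureU2 _ _ _) _ => //.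
  by apply: bigsetU_measurable => i _.
exact: leeD2l.
Qed.

Lemma mu_bigU_disj d2 (T : measurableType d2) (mu : probability T R) (I : eqType)
  (r : seq I) (F : I -> set T) : uniq r -> (forall i, measurable (F i)) ->
  (forall i j, i != j -> F i `&` F j = set0) ->
  mu (\big[setU/set0]_(i <- r) F i) = (\sum_(i <- r) mu (F i))%E.
Proof.
move=> + mF dF; elim: r => [|a r IH]; first by rewrite !big_nil measure0.
rewrite /= => /andP[ar ur]; rewrite !big_cons measureU.
- by congr (_ + _)%E; exact: (IH ur).
- exact: mF.
- by apply: bigsetU_measurable => i _.
rewrite big_distrr /= big_seq_cond; apply: big1 => i /andP[ir _].
apply: dF; apply/eqP => ai; by move: ar; rewrite ai ir.
Qed.

Variables (mu : probability (R * R)%type R) (n : nat) (X : 'I_n -> Omega -> R * R).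
Hypothesis hiid : iid_sample P mu X.

Definition Eset (C : set (R * R)) (f : {ffun 'I_n -> bool}) : set Omega :=
  \bigcap_(i in [set: 'I_n]) X i @^-1` (if f i then C else ~` C).

Lemma Eset_meas C f : measurable C -> measurable (Eset C f).
Proof.
move=> mC; apply: fin_bigcap_measurable; first exact: finite_finset.
move=> i _; rewrite -[X i @^-1` _]setTI; apply: (hiid.1 i) => //.
by case: (f i) => //; apply: measurableC.
Qed.

Lemma Eset_prob C f : measurable C ->
  P (Eset C f) = (\prod_(i < n) (if f i then fine (mu C) else 1 - fine (mu C)))%:E.
Proof.
move=> mC; rewrite /Eset hiid.2.2; last first.
  by move=> i; case: (f i) => //; apply: measurableC.
rewrite -prodEFin; apply: eq_bigr => i _.
rewrite hiid.2.1; last by case: (f i) => //; apply: measurableC.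
have hf : mu C = (fine (mu C))%:E by rewrite fineK // fin_num_measure.
case: (f i) => //; rewrite probability_setC // hf //.
Qed.

Lemma Eset_pat C w : Eset C [ffun i => `[< C (X i w) >]] w.
Proof.
move=> i _ /=; rewrite ffunE; case: asboolP => //.
Qed.

Lemma Eset_cnt C f w : Eset C f w -> \sum_(i < n) \1_C (X i w) = \sum_(i < n) (f i)%:R :> R.
Proof.
move=> hw; apply: eq_bigr => i _; have := hw i I; rewrite indicE.
by case: (f i) => /= h; [rewrite mem_set | rewrite memNset].
Qed.
End Prob.

Lemma mem_bigU (T : Type) (I : Type) (r : seq I) (Pp : pred I) (F : I -> set T) w :
  (\big[setU/set0]_(i <- r | Pp i) F i) w -> exists i, Pp i /\ F i w.
Proof.
elim: r => [|a r IH]; rewrite ?big_nil // big_cons.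
case: ifP => Pa; last exact: IH.
by move=> [Fa|/IH //]; exists a.
Qed.

Lemma mem_bigU_intro (T : Type) (I : eqType) (r : seq I) (Pp : pred I) (F : I -> set T) w i :
  i \in r -> Pp i -> F i w -> (\big[setU/set0]_(i <- r | Pp i) F i) w.
Proof.
elim: r => [|a r IH] //; rewrite big_cons in_cons => /orP[/eqP <-|ir] Pi Fi.
  by rewrite Pi; left.
by case: ifP => _; [right|]; apply: IH.
Qed.

Lemma mem_bigI_intro (T : Type) (I : Type) (r : seq I) (F : I -> set T) w :
  (forall i, F i w) -> (\big[setI/setT]_(i <- r) F i) w.
Proof.
move=> h; elim: r => [|a r IH]; rewrite ?big_nil // big_cons; by split.
Qed.

Lemma mem_bigI_elim (T : Type) (I : eqType) (r : seq I) (F : I -> set T) w i :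
  i \in r -> (\big[setI/setT]_(i <- r) F i) w -> F i w.
Proof.
elim: r => [|a r IH] //; rewrite big_cons in_cons => /orP[/eqP <-|ir] [Fa Fr] //.
exact: IH.
Qed.

Lemma powR_expR (R : realType) (a x : R) : 0 < a -> a `^ x = expR (x * ln a).
Proof. by move=> a0; rewrite /powR gt_eqF. Qed.

Arguments mem_bigU_intro {T I r Pp F w i}.
Arguments mem_bigI_elim {T I r F w i}.
Arguments mem_bigU {T I r Pp F w}.
Arguments P_bigU {R d Omega} P {I r Pp F}.
Arguments cntR {R n}.


Theorem lemma3p5 (R : realType) (alpha : R) : 0 <= alpha ->
  exists (c C : R) (k : nat), 0 < c /\
  forall (mu : probability (R * R)%type R), mu (@unit_square R) = 1%E ->
  forall (d : measure_display) (Omega : measurableType d)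
         (P : probability Omega R) (n : nat) (X : 'I_n -> Omega -> R * R),
    (0 < n)%N -> iid_sample P mu X ->
    exists G : set Omega, measurable G /\
      (1 - (n%:R) `^ (- c) <= fine (P G)) /\
      (forall w, G w ->
        grid_excess mu alpha (fun i => X i w)
          <= C * (n%:R) `^ (alpha - 2^-1) * (ln (n%:R)) ^+ k).
Proof.
move=> a0.
pose K : R := 2 * alpha + 3.
have K0 : 0 < K by rewrite /K; lra.
have ln2 : 0 < ln (2 : R) by apply: ln_gt0; lra.
exists 1, ((ln (2:R))^-1 + 4 * K), 1%N; split; first lra.
move=> mu hmu d Omega P n X n0 hiid.
have [n1|n2] : n = 1%N \/ (2 <= n)%N by lia.
  subst n; exists set0; split; first exact: measurable0.
  split; last by [].
  by rewrite powR1 subrr measure0 /=.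
pose L := ln (n%:R : R).
have nR0 : (0:R) < n%:R by rewrite ltr0n; lia.
have nR2 : (2:R) <= n%:R by rewrite (ler_nat R 2 n).
have L2 : ln 2 <= L by rewrite /L ler_ln ?posrE //; lra.
have L0 : 0 < L by lra.
have nE : n%:R = expR L :> R by rewrite /L lnK // posrE.
pose m := grid_count n alpha.
pose theta := (n%:R : R) `^ (alpha - 2^-1).
have thE : theta = expR ((alpha - 2^-1) * L) by rewrite /theta powR_expR.
have th0 : 0 < theta by rewrite thE expR_gt0.
pose t := expR (alpha * L).
have t1 : 1 <= t by rewrite /t -expR0 ler_expR; apply: mulr_ge0 => //; lra.
have mt : m%:R <= t + 1.
  rewrite /m /grid_count.
  have -> : (grid_side n alpha)^-1 = t.
    by rewrite /grid_side powR_expR // mulNr expRN invrK.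
  have c0 : (0 <= Num.ceil t)%R by rewrite ceil_ge0; lra.
  rewrite natr_absz ger0_norm //.
  have := real_ceilB1_lt (num_real t); rewrite intrB /=; lra.
pose I := ('I_m * 'I_m)%type.
pose Cc := fun c : I => grid_cell n alpha c.1 c.2.
have mC c : measurable (Cc c) by apply: cell_meas.
pose p := fun c : I => fine (mu (Cc c)).
have pE c : mu (Cc c) = (p c)%:E by rewrite fineK // fin_num_measure.
have p0 c : 0 <= p c by apply: fine_ge0; apply: measure_ge0.
have psum : \sum_(c : I) p c <= 1.
  have disj : forall c c' : I, c != c' -> Cc c `&` Cc c' = set0.
    move=> [i j] [i' j'] h; apply/seteqP; split => // -[x y] /=.
    rewrite /grid_cell /= => -[[_ [hi hj]] [_ [hi' hj']]].
    have ei : i = i' by apply: ord_inj; rewrite -hi -hi'.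
    have ej : j = j' by apply: ord_inj; rewrite -hj -hj'.
    by move: h; rewrite ei ej eqxx.
  rewrite -lee_fin -sumEFin.
  rewrite (eq_bigr (fun c => mu (Cc c))); last by move=> c _; rewrite pE.
  rewrite -(@mu_bigU_disj R _ _ mu _ _ _ (index_enum_uniq I) mC disj).
  apply: probability_le1; exact: bigsetU_measurable.
pose D := K * L / (theta * n%:R).
have D0 : 0 < D by rewrite /D; apply: divr_gt0; apply: mulr_gt0.
pose good := fun (c : I) (f : {ffun 'I_n -> bool}) =>
  (p c - (n%:R)^-1 * cntR f <= theta * p c + D).
pose E := fun (c : I) f => Eset R d Omega n X (Cc c) f.
have mE c f : measurable (E c f) := @Eset_meas R d Omega P mu n X hiid (Cc c) f (mC c).
pose G := \big[setI/setT]_(c : I) \big[setU/set0]_(f | good c f) E c f.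
have mG : measurable G.
  by apply: bigsetI_measurable => c _; apply: bigsetU_measurable => f _.
exists G; split => //.
split.
  have sub : ~` G `<=` \big[setU/set0]_(c : I) \big[setU/set0]_(f | ~~ good c f) E c f.
    move=> w nG; apply: contrapT => hn; apply: nG; apply: mem_bigI_intro => c.
    pose f0 := [ffun i => `[< Cc c (X i w) >]].
    have Ew : E c f0 w := @Eset_pat R d Omega n X (Cc c) w.
    have [gf|bf] := boolP (good c f0).
      exact: (mem_bigU_intro (mem_index_enum f0) gf Ew).
    exfalso; apply: hn; apply: (mem_bigU_intro (mem_index_enum c)) => //.
    exact: (mem_bigU_intro (mem_index_enum f0) bf Ew).
  have hPc : (P (~` G) <= \sum_(c : I) \sum_(f | ~~ good c f) P (E c f))%E.
    apply: le_trans (le_measure _ _ _ sub) _; rewrite ?inE.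
    - exact: measurableC.
    - by apply: bigsetU_measurable => c _; apply: bigsetU_measurable => f _.
    apply: le_trans (P_bigU P _) _.
      by move=> c; apply: bigsetU_measurable => f _.
    by apply: lee_sum => c _; apply: P_bigU.
  have hc c : (\sum_(f | ~~ good c f) P (E c f) <= (expR (- (K * L)))%:E)%E.
    rewrite (eq_bigr _ (fun f _ => @Eset_prob R d Omega P mu n X hiid (Cc c) f (mC c))).
    rewrite sumEFin lee_fin.
    have hp : 0 <= p c <= 1.
      rewrite p0 /=; rewrite -lee_fin -pE; exact: probability_le1.
    have := @binom_chernoff R n (p c) theta
       (n%:R * p c - n%:R * theta * p c - n%:R * D) (fun f => ~~ good c f) hp (ltW th0).
    have hexp : theta * (n%:R * p c - n%:R * theta * p c - n%:R * D) - n%:R * p c * theta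
        + n%:R * p c * theta ^+ 2 = - (K * L).
      rewrite /D; field; apply/andP; split; apply: lt0r_neq0 => //.
    rewrite hexp; apply.
    move=> f; rewrite /good -ltNge => hf.
    have hq : cntR f = n%:R * ((n%:R)^-1 * cntR f) :> R by field; apply: lt0r_neq0.
    rewrite hq; move: hf; set q := (n%:R)^-1 * cntR f => hf.
    have : n%:R * q <= n%:R * (p c - theta * p c - D) by apply: ler_wpM2l; lra.
    lra.
  have hM : (P (~` G) <= ((expR (- (K * L))) *+ #|{: I}|)%:E)%E.
    apply: le_trans hPc _.
    apply: le_trans (lee_sum (index_enum I) (fun c _ => hc c)) _.
    by rewrite sumEFin lee_fin sumr_const.
  have finG : P (~` G) \is a fin_num.
    by apply: fin_num_measure; apply: measurableC.
  have -> : P G = (1 - fine (P (~` G)))%:E.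
    rewrite -{1}(setCK G) probability_setC; last exact: measurableC.
    by rewrite EFinB fineK.
  rewrite /= powR_expR // mulN1r.
  move: hM; rewrite -(fineK finG) lee_fin; set z := fine (P (~` G)) => hz.
  rewrite card_prod !card_ord -/m in hz.
  have hm2 : (m * m)%:R <= 4 * t ^+ 2 :> R.
    rewrite natrM; have m0 : (0 : R) <= m%:R by apply: ler0n.
    nra.
  have e3 : t ^+ 2 * expR (- (K * L)) = expR (- (3 * L)).
    rewrite /t -expRM_natl -expRD; congr expR; rewrite /K; ring.
  have e1 : expR (- L) = expR (- (3 * L)) * (n%:R) ^+ 2.
    rewrite nE -expRM_natl -expRD; congr expR; ring.
  have e0 : 0 < expR (- (K * L)) := expR_gt0 _.
  have e30 : 0 < expR (- (3 * L)) := expR_gt0 _.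
  have n4 : 4 <= (n%:R : R) ^+ 2 by nra.
  rewrite -[_ *+ (m * m)]mulr_natr in hz; rewrite /= -/L.
  have : (m * m)%:R * expR (- (K * L)) <= 4 * expR (- (3 * L)).
    rewrite -e3; nra.
  nra.
move=> w Gw.
have hcell c : Num.max 0 (p c - empirical_mass (fun i => X i w) (Cc c)) <= theta * p c + D.
  have := mem_bigI_elim (mem_index_enum c) Gw => /mem_bigU [f [gf Ef]].
  have -> : empirical_mass (fun i => X i w) (Cc c) = (n%:R)^-1 * cntR f.
    by rewrite /empirical_mass (@Eset_cnt R d Omega n X (Cc c) f w Ef).
  rewrite ge_max; apply/andP; split; last exact: gf.
  have := p0 c; have := th0; nra.
rewrite /grid_excess pair_big /=.
apply: le_trans (ler_sum _ (fun c _ => hcell c)) _.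
rewrite big_split /= -mulr_sumr sumr_const card_prod !card_ord -/m -[D *+ _]mulr_natr.
have hm2 : (m * m)%:R <= 4 * t ^+ 2 :> R.
  rewrite natrM; have m0 : (0 : R) <= m%:R by apply: ler0n.
  nra.
have htt : t ^+ 2 = theta ^+ 2 * n%:R.
  rewrite thE nE /t -!expRM_natl -expRD; congr expR; by field.
have MD : D * (m * m)%:R <= 4 * K * L * theta.
  apply: (@le_trans _ _ (D * (4 * t ^+ 2))); first by apply: ler_wpM2l => //; apply: ltW.
  rewrite htt.
  have -> : D * (4 * (theta ^+ 2 * n%:R)) = 4 * K * L * theta.
    by rewrite /D; field; apply/andP; split; apply: lt0r_neq0.
  by [].
have hL : 1 <= L * (ln (2:R))^-1 by rewrite ler_pdivlMr // mul1r.
rewrite expr1.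
have hs := psum.
set S := \sum_(c : I) p c in hs *.
set il := (ln (2:R))^-1 in hL *.
have : theta * S <= theta by rewrite -[X in _ <= X]mulr1; apply: ler_wpM2l => //; apply: ltW.
have : theta <= theta * (L * il) by rewrite -[X in X <= _]mulr1; apply: ler_wpM2l => //; apply: ltW.
rewrite -/theta -/L => h1 h2.
nra.
Qed.
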